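(* If $\mu$ satisfies $\mathrm{IC}(1)$, then $\int e^{2\Lambda^*_{\overline{\mu}}(x/2)}\,d\mu(x)\int e^{-\Lambda^*_{\overline{\mu}}(x)}\,d\mu(x)\le 1$.
   Context: A pair $(\mu,W)$, with $\mu$ a probability measure on $\mathbb{R}^n$ and $W:\mathbb{R}^n\to[0,\infty]$, satisfies property $(\tau)$ if for every bounded function $f$, $\int e^{h}\,d\mu\int e^{-f}\,d\mu\le 1$, where $h(x)=\inf_{y}\{W(x-y)+f(y)\}$ is the infimum convolution of $W$ and $f$. For a measure $\mu$, $\mu'$ is its reflection through the origin, $\overline{\mu}=\mu*\mu'$, $\Lambda_\mu=\ln\int e^{\langle \cdot,y\rangle}d\mu(y)$, and $\Lambda^*_\mu(x)=\sup_y\{\langle x,y\rangle-\Lambda_\mu(y)\}$. A probability measure $\mu$ satisfies $\mathrm{IC}(\beta)$ ($\beta>0$) if the pair $(\mu,\Lambda^*_{\overline{\mu}}(\cdot/\beta))$ satisfies property $(\tau)$. *)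

(* Defs.v *)
From HB Require Import structures.
From mathcomp Require Import all_boot all_order all_algebra.
From mathcomp Require Import all_classical all_reals all_analysis.
Set Implicit Arguments. Unset Strict Implicit. Unset Printing Implicit Defensive.
Import Order.TTheory GRing.Theory Num.Theory.
Import numFieldNormedType.Exports.
Local Open Scope classical_set_scope.
Local Open Scope ring_scope.

(* R^n, realised as row vectors 'rV[R]_n with the Borel sigma-algebra
   (the sigma-algebra generated by the open sets of its usual topology). *)
Definition Rn (R : realType) (n : nat) :=
  g_sigma_algebraType (@open ('rV[R]_n)).

Definition dotp (R : realType) (n : nat) (x y : 'rV[R]_n) : R :=
  \sum_(i < n) x ord0 i * y ord0 i.

Local Open Scope ereal_scope.

Definition reflect_measure (R : realType) (n : nat)
  (mu : set (Rn R n) -> \bar R) : set (Rn R n) -> \bar R :=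
  pushforward mu (fun x : Rn R n => (- x)%R : Rn R n).

Definition convolution (R : realType) (n : nat)
  (mu nu : set (Rn R n) -> \bar R) : set (Rn R n) -> \bar R :=
  pushforward (mu \x nu) (fun p : (Rn R n * Rn R n)%type => (p.1 + p.2)%R : Rn R n).

Definition symmetrization (R : realType) (n : nat)
  (mu : set (Rn R n) -> \bar R) : set (Rn R n) -> \bar R :=
  convolution mu (reflect_measure mu).

Definition logLaplace (R : realType) (n : nat)
  (mu : set (Rn R n) -> \bar R) (x : 'rV[R]_n) : \bar R :=
  lne (\int[mu]_(y in [set: Rn R n]) expeR (dotp x y)%:E).

Definition legendre_logLaplace (R : realType) (n : nat)
  (mu : set (Rn R n) -> \bar R) (x : 'rV[R]_n) : \bar R :=
  ereal_sup [set (dotp x y)%:E - logLaplace mu y | y in [set: 'rV[R]_n]].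

Definition inf_conv (R : realType) (n : nat)
  (W : 'rV[R]_n -> \bar R) (f : 'rV[R]_n -> R) (x : 'rV[R]_n) : \bar R :=
  ereal_inf [set W (x - y)%R + (f y)%:E | y in [set: 'rV[R]_n]].

Definition property_tau (R : realType) (n : nat)
  (mu : probability (Rn R n) R) (W : 'rV[R]_n -> \bar R) : Prop :=
  forall f : Rn R n -> R,
    measurable_fun [set: Rn R n] f ->
    (exists M : R, forall x, (`|f x| <= M)%R) ->
    (\int[mu]_(x in [set: Rn R n]) expeR (inf_conv W f x)) *
    (\int[mu]_(x in [set: Rn R n]) expeR (- (f x)%:E)) <= 1.

Definition IC (R : realType) (n : nat) (beta : R)
  (mu : probability (Rn R n) R) : Prop :=
  property_tau mu
    (fun x => legendre_logLaplace (symmetrization mu) (beta^-1 *: x)%R).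

(* Main.v *)
Require Import Defs.
From HB Require Import structures.
From mathcomp Require Import all_boot all_order all_algebra.
From mathcomp Require Import all_classical all_reals all_analysis.
From mathcomp Require Import ring lra.
Import Order.TTheory GRing.Theory Num.Theory.
Import numFieldNormedType.Exports.
Local Open Scope classical_set_scope.
Local Open Scope ring_scope.
Local Open Scope ereal_scope.
Section generic.
Context d (T : measurableType d) (R : realType) (mu : {measure set T -> \bar R}).
Import HBNNSimple.

Lemma le_intT (f1 f2 : T -> \bar R) : (forall x, 0 <= f1 x) -> (forall x, f1 x <= f2 x) ->
  \int[mu]_(x in setT) f1 x <= \int[mu]_(x in setT) f2 x.
Proof.
move=> f10 f12; have f20 x : 0 <= f2 x := le_trans (f10 x) (f12 x).
rewrite !ge0_integralTE//; apply: ereal_sup_le => _ [h hf1 <-]; exists h => //=.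
by move=> x; exact: le_trans (hf1 x) (f12 x).
Qed.

Lemma intZ_ge (r : R) (G : T -> \bar R) : (0 <= r)%R -> (forall x, 0 <= G x) ->
  r%:E * \int[mu]_(x in setT) G x <= \int[mu]_(x in setT) (r%:E * G x).
Proof.
move=> r0 G0; have rG0 x : 0 <= r%:E * G x by rewrite mule_ge0.
move: r0; rewrite le_eqVlt => /orP[/eqP <-|r0].
  by rewrite mul0e; apply: integral_ge0 => x _; rewrite mul0e.
rewrite !ge0_integralTE// -ereal_sup_pZl//; apply: ge_ereal_sup => _ [_ [h hG <-] <-].
apply: ereal_sup_ubound => /=; exists (scale_nnsfun h (ltW r0)) => /=.
  by move=> x /=; rewrite EFinM lee_pmul2l.
exact: sintegralrM.
Qed.

Lemma sup_add_le (X Y : set \bar R) S : (exists x, X x) -> (exists y, Y y) ->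
  (forall x, X x -> 0 <= x) -> (forall y, Y y -> 0 <= y) ->
  (forall x y, X x -> Y y -> x + y <= S) -> ereal_sup X + ereal_sup Y <= S.
Proof.
move=> [x0 Xx0] [y0 Yy0] X0 Y0 H.
have S0 : 0 <= S := le_trans (adde_ge0 (X0 _ Xx0) (Y0 _ Yy0)) (H _ _ Xx0 Yy0).
case: S H S0 => [s| |] H S0; [|by rewrite leey|by []].
have Xle x : X x -> x <= s%:E.
  by move=> Xx; exact: le_trans (leeDl _ (Y0 _ Yy0)) (H _ _ Xx Yy0).
have Xfin x : X x -> x \is a fin_num.
  by move=> Xx; rewrite ge0_fin_numE ?X0// (le_lt_trans (Xle _ Xx)) ?ltry.
have supY x : X x -> ereal_sup Y <= s%:E - x.
  by move=> Xx; apply: ge_ereal_sup => y Yy; rewrite lee_suber_addl//; exact: H.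
have fY : ereal_sup Y \is a fin_num.
  rewrite ge0_fin_numE; last exact: le_trans (Y0 _ Yy0) (ereal_sup_ubound Yy0).
  have [x0r x0E] : exists r : R, x0 = r%:E by apply/EFin_fin_numP; exact: Xfin.
  move: (supY _ Xx0); rewrite x0E -EFinB => /le_lt_trans; apply; exact: ltry.
rewrite -lee_suber_addr//; apply: ge_ereal_sup => x Xx.
by rewrite lee_suber_addr// -lee_suber_addl//; exact: supY.
Qed.

Lemma int_superadd (A B : T -> \bar R) : (forall x, 0 <= A x) -> (forall x, 0 <= B x) ->
  \int[mu]_(x in setT) A x + \int[mu]_(x in setT) B x <= \int[mu]_(x in setT) (A x + B x).
Proof.
move=> A0 B0; have AB0 x : 0 <= A x + B x by rewrite adde_ge0.
rewrite !ge0_integralTE//; apply: sup_add_le.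
- by exists (sintegral mu (@nnsfun0 _ T R)); exists nnsfun0 => // x /=.
- by exists (sintegral mu (@nnsfun0 _ T R)); exists nnsfun0 => // x /=.
- by move=> _ [h _ <-]; exact: sintegral_ge0.
- by move=> _ [h _ <-]; exact: sintegral_ge0.
move=> _ _ [h1 h1A <-] [h2 h2B <-]; rewrite -sintegralD.
apply: ereal_sup_ubound => /=; exists (add_nnsfun h1 h2) => //=.
by move=> x /=; rewrite EFinD; exact: leeD.
Qed.

Lemma int_supersum (I : Type) (s : seq I) (F : I -> T -> \bar R) :
  (forall i x, 0 <= F i x) ->
  \sum_(i <- s) \int[mu]_(x in setT) F i x <= \int[mu]_(x in setT) (\sum_(i <- s) F i x).
Proof.
move=> F0; elim: s => [|a s IH].
  by rewrite big_nil; apply: integral_ge0 => x _; rewrite big_nil.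
rewrite big_cons [X in _ <= X](eq_integral (fun x => F a x + \sum_(i <- s) F i x)); last first.
  by move=> x _ /=; rewrite big_cons.
apply: le_trans (leeD (lexx _) IH) _; apply: int_superadd => // x.
exact: sume_ge0.
Qed.

End generic.
Section rn.
Variables (R : realType) (n : nat).
Local Notation T := (Rn R n).
Import HBNNSimple.

Lemma open_meas (U : set 'rV[R]_n) : open U -> measurable (U : set T).
Proof. by move=> oU; exact: sub_gen_smallest. Qed.

Lemma cont_meas (g : 'rV[R]_n -> 'rV[R]_n) : continuous g ->
  measurable_fun [set: T] (g : T -> T).
Proof.
move=> gc; apply: (@measurability _ _ T T setT g (@open [the topologicalType of 'rV[R]_n])) => //.
move=> _ [B oB <-]; rewrite setTI; apply: open_meas; apply: open_comp => // x _.
Qed.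

Lemma dotp0l (y : 'rV[R]_n) : dotp 0 y = 0%R.
Proof. by rewrite /dotp big1// => i _; rewrite mxE mul0r. Qed.

Lemma dotp0r (y : 'rV[R]_n) : dotp y 0 = 0%R.
Proof. by rewrite /dotp big1// => i _; rewrite mxE mulr0. Qed.

Lemma sint_raw (M : set T -> \bar R) (M0 : M set0 = 0) (f : T -> R) :
  sintegral M f = \sum_(x \in range f) x%:E * M (f @^-1` [set x]).
Proof.
rewrite (fsbig_widen (range f) setT)//= => x [_ Nfx] /=.
by rewrite preimage10// M0 mule0.
Qed.

Lemma intT_raw (M : set T -> \bar R) (M0 : M set0 = 0) (f : T -> \bar R) :
  (forall x, 0 <= f x) ->
  integral M setT f = ereal_sup [set sintegral M h |
     h in [set h : {nnsfun T >-> R} | forall x, (h x)%:E <= f x]].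
Proof.
move=> f0; rewrite /integral patch_setT.
have -> : f^\+ = f by apply/funext => x; rewrite (@ge0_funeposE _ _ setT)// in_setT.
have -> : f^\- = cst 0 by apply/funext => x; rewrite (@ge0_funenegE _ _ setT)// in_setT.
suff -> : ereal_sup [set sintegral M h |
     h in [set h : {nnsfun T >-> R} | forall x, (h x)%:E <= cst 0 x]] = 0 by rewrite sube0.
have s0 (h : {nnsfun T >-> R}) : (forall x, (h x)%:E <= cst 0 x) -> sintegral M h = 0.
  move=> h0; rewrite sint_raw// fsbig1// => _ [x _ <-].
  have -> : h x = 0%R by apply/eqP; rewrite eq_le -lee_fin h0 /= fun_ge0.
  by rewrite mul0e.
apply/eqP; rewrite eq_le; apply/andP; split.
  by apply: ge_ereal_sup => _ [h h0 <-]; rewrite s0.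
by apply: ereal_sup_ubound; exists nnsfun0 => //; rewrite s0.
Qed.

Variable mu : probability T R.

Lemma mubarE A : symmetrization mu A = \int[mu]_(x in setT) mu [set y | A (x - y)%R].
Proof.
rewrite /symmetrization /convolution /pushforward /product_measure1.
apply: eq_integral => x _ /=; rewrite /reflect_measure /pushforward.
congr (mu _); apply/seteqP; split => y /=; rewrite /xsection /preimage /= in_setE //.
Qed.

Lemma mubar0 : symmetrization mu set0 = 0.
Proof.
rewrite mubarE; apply: integral0_eq => x _.
by rewrite (_ : [set y | set0 _] = set0) ?measure0.
Qed.

End rn.
Section rn2.
Variables (R : realType) (n : nat).
Local Notation T := (Rn R n).
Import HBNNSimple.
Variable mu : probability T R.

Lemma contB (x : 'rV[R]_n) : continuous (fun y : 'rV[R]_n => x - y)%R.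
Proof.
move=> y; apply: (@continuousB _ _ _ (fun=> x) id); [exact: cst_continuous|exact: cvg_id].
Qed.

Lemma sint_mubar (h : {nnsfun T >-> R}) : (forall x, h x <= 1)%R ->
  sintegral (symmetrization mu) h <= 1.
Proof.
move=> h1; rewrite sint_raw; last exact: mubar0.
have fr := fimfunP h.
have r01 r : range h r -> (0 <= r <= 1)%R by move=> [z _ <-]; rewrite fun_ge0 h1.
pose G r x := mu [set y | h (x - y)%R = r].
have F0 r x : 0 <= r%:E * G r x.
  have [hr|hr] := pselect (range h r).
    by rewrite mule_ge0// lee_fin; case/andP: (r01 _ hr).
  rewrite /G (_ : [set y | h (x - y)%R = r] = set0) ?measure0 ?mule0//.
  by apply/seteqP; split => y //= hy; apply: hr; exists (x - y)%R.
apply: (@le_trans _ _ (\sum_(r \in range h) \int[mu]_(x in setT) (r%:E * G r x))).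
  apply: lee_fsum => // r hr; rewrite mubarE; apply: intZ_ge.
    by case/andP: (r01 _ hr).
  by move=> x; exact: measure_ge0.
rewrite fsbig_finite//.
apply: le_trans (@int_supersum _ _ _ mu _ _ _ _) _; first by move=> *; exact: F0.
apply: le_trans (@le_intT _ _ _ mu _ (fun _ => 1) _ _) _.
- by move=> x; apply: sume_ge0 => *; exact: F0.
- move=> x; rewrite -fsbig_finite//.
  apply: (@le_trans _ _ (\sum_(r \in range h) G r x)).
    apply: lee_fsum => // r /r01 /andP[r0 r1]; apply: gee_pMl; [by []|exact: measure_ge0|by rewrite lee_fin].
  rewrite /G -measure_fin_bigcup//.
  + rewrite (_ : \bigcup_(i in range h) _ = setT); first exact: probability_le1.
    apply/seteqP; split => // y _; exists (h (x - y)%R) => //; exists (x - y)%R.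
  + by move=> i j _ _ [y /= [-> ->]].
  + move=> r _; have := @cont_meas R n _ (contB x) measurableT (h @^-1` [set r]) (measurable_sfunP h (measurable_set1 r)).
    by rewrite setTI.
- by rewrite integral_cst// mul1e; exact: probability_le1.
Qed.

Lemma Lam0 : logLaplace (symmetrization mu) 0 <= 0.
Proof.
rewrite /logLaplace lne_le0.
rewrite (_ : (fun y : T => expeR (dotp 0 y)%:E) = fun _ => 1); last first.
  by apply/funext => y; rewrite dotp0l expeR0.
rewrite intT_raw; [|exact: mubar0|by []].
apply: ge_ereal_sup => _ [h h1 <-]; apply: sint_mubar => x.
by rewrite -lee_fin h1.
Qed.

End rn2.
Lemma cont_sum (R : realType) (m : nat) (I : Type) (s : seq I) (F : I -> 'rV[R]_m -> R) :
  (forall i, continuous (F i)) -> continuous (fun x => \sum_(i <- s) F i x)%R.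
Proof.
move=> Fc; elim: s => [|a s IH].
  by rewrite (_ : (fun _ => _) = fun=> 0%R); [exact: cst_continuous|apply/funext => x; rewrite big_nil].
rewrite (_ : (fun _ => _) = (F a + (fun x => \sum_(i <- s) F i x))%R); last first.
  by apply/funext => x; rewrite big_cons.
by move=> x; apply: continuousD; [exact: Fc|exact: IH].
Qed.

Section main.
Variables (R : realType) (n : nat).
Local Notation T := (Rn R n).
Variable mu : probability T R.
Local Notation L := (legendre_logLaplace (symmetrization mu)).
Local Notation Lam := (logLaplace (symmetrization mu)).

Lemma L_ge0 x : 0 <= L x.
Proof.
have h0 : [set (dotp x y)%:E - Lam y | y in [set: 'rV[R]_n]] ((dotp x 0)%:E - Lam 0) by exists 0%R.
apply: le_trans (ereal_sup_ubound h0); rewrite dotp0r sub0e oppe_ge0; exact: Lam0.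
Qed.

Lemma dotpD_half (x y z : 'rV[R]_n) : (dotp (x - y) z + dotp y z = 2 * dotp (2^-1 *: x) z)%R.
Proof.
rewrite /dotp -big_split mulr_sumr; apply: eq_bigr => i _; rewrite !mxE /=.
by field.
Qed.

Lemma ereal_half (a b1 b2 : R) c : (b1 + b2 = 2 * a)%R ->
  2%:E * (a%:E - c) = (b1%:E - c) + (b2%:E - c).
Proof.
have E1 (r : R) : r%:E - +oo = -oo by [].
have E2 (r : R) : r%:E - -oo = +oo by [].
case: c => [c| |] h.
- rewrite -!EFinB -EFinM; congr EFin; lra.
- by rewrite !E1 mulrNy gtr0_sg// mul1e.
- by rewrite !E2 mulry gtr0_sg// mul1e.
Qed.

Lemma L_conv x y : 2%:E * L (2^-1 *: x) <= L (x - y) + L y.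
Proof.
rewrite /legendre_logLaplace -ereal_sup_pZl//.
apply: ge_ereal_sup => _ [_ [z _ <-] <-].
rewrite (ereal_half _ _ _ _ (dotpD_half x y z)); apply: leeD; apply: ereal_sup_ubound; by exists z.
Qed.

Lemma cont_dotp z : continuous (fun x : 'rV[R]_n => dotp x z).
Proof.
apply: cont_sum => i x; apply: continuousM; first exact: coord_continuous.
exact: cst_continuous.
Qed.

Lemma open_L (a : R) : open [set x : 'rV[R]_n | a%:E < L x].
Proof.
rewrite (_ : [set x | _] = \bigcup_(z in setT) [set x | a%:E < (dotp x z)%:E - Lam z]).
  apply: bigcup_open => z _; case: (Lam z) => [c| |].
  - rewrite (_ : [set x | _] = (fun x => dotp x z) @^-1` [set r | (a + c)%:E < r%:E]).
      by apply: open_comp => [x _|]; [exact: cont_dotp|exact: open_ereal_gt].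
    by apply/seteqP; split => x /=; rewrite -EFinB !lte_fin ltrBrDr.
  - rewrite (_ : [set x | _] = set0); first exact: open0.
    by apply/seteqP; split => x //=; rewrite addeNy.
  - rewrite (_ : [set x | _] = setT); first exact: openT.
    by apply/seteqP; split => x //= _; rewrite addey// ltry.
apply/seteqP; split => x /=.
  by move/ereal_sup_gt => [_ [z _ <-] h]; exists z.
move=> [z _ h]; apply: lt_le_trans h _; apply: ereal_sup_ubound; by exists z.
Qed.

End main.
Section main2.
Variables (R : realType) (n : nat).
Local Notation T := (Rn R n).
Variable mu : probability T R.
Local Notation L := (legendre_logLaplace (symmetrization mu)).
Import HBNNSimple.

Lemma mk_fin (k : R) x : (0 <= k)%R -> mine (L x) k%:E \is a fin_num.
Proof.
move=> k0; rewrite ge0_fin_numE; last by rewrite le_min L_ge0 lee_fin k0.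
by apply: (@le_lt_trans _ _ k%:E); [rewrite ge_min lexx orbT|exact: ltry].
Qed.

Lemma fk_meas (k : R) : (0 <= k)%R ->
  measurable_fun [set: T] (fun x : T => fine (mine (L x) k%:E)).
Proof.
move=> k0; apply: (measurability _ (measurable_realfun.RGenOInfty.measurableE R)) => //.
move=> _ [_ [a ->] <-]; rewrite setTI.
rewrite (_ : _ @^-1` _ = [set x : T | a%:E < L x] `&` [set _ | (a < k)%R]).
  apply: measurableI; first by apply: open_meas; exact: open_L.
  have [ak|ak] := boolP (a < k)%R.
    by rewrite (_ : [set _ | _] = setT)//; apply/seteqP; split.
  by rewrite (_ : [set _ | _] = set0)//; apply/seteqP; split => x //= /negP.
apply/seteqP; split => x /=; rewrite in_itv /= andbT.
  by rewrite -lte_fin fineK ?mk_fin// lt_min => /andP[].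
by move=> [h1 h2]; rewrite -lte_fin fineK ?mk_fin// lt_min h1 lte_fin h2.
Qed.

End main2.
Lemma key_ineq (R : realType) (n : nat) (mu : probability (Rn R n) R) (k : R) :
  IC 1 mu -> (0 <= k)%R ->
  \int[mu]_(x in [set: Rn R n])
      expeR (mine (2%:E * legendre_logLaplace (symmetrization mu) (2^-1 *: x)%R) k%:E) *
  \int[mu]_(x in [set: Rn R n])
      expeR (- legendre_logLaplace (symmetrization mu) x) <= 1.
Proof.
move=> IC1 k0.
set L := legendre_logLaplace (symmetrization mu).
pose f x := fine (mine (L x) k%:E).
have fE x : (f x)%:E = mine (L x) k%:E by rewrite fineK// mk_fin.
have fb : exists M : R, forall x, (`|f x| <= M)%R.
  exists k => x; rewrite ger0_norm -?lee_fin ?fE ?ge_min ?lexx ?orbT//.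
  by rewrite le_min L_ge0 lee_fin k0.
have := IC1 f (@fk_meas R n mu k k0) fb.
apply: le_trans; apply: lee_pmul.
- by apply: integral_ge0 => x _; exact: expeR_ge0.
- by apply: integral_ge0 => x _; exact: expeR_ge0.
- apply: le_intT => [x|x]; first exact: expeR_ge0.
  rewrite lee_expeR /inf_conv; apply: le_ereal_inf_tmp => _ [y _ <-].
  rewrite invr1 scale1r fE.
  have [Lyk|Lyk] := leP (L y) k%:E.
    apply: le_trans (_ : _ <= 2%:E * L (2^-1 *: x)%R) _.
      by rewrite ge_min lexx.
    exact: L_conv.
  apply: le_trans (_ : _ <= k%:E) _.
    by rewrite ge_min lexx orbT.
  by rewrite leeDr// L_ge0.
- apply: le_intT => [x|x]; first exact: expeR_ge0.
  by rewrite lee_expeR fE leeN2 ge_min lexx.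
Qed.
Import HBNNSimple.
Theorem lemma2 (R : realType) (n : nat) (mu : probability (Rn R n) R) :
  IC 1 mu ->
  (\int[mu]_(x in [set: Rn R n])
      expeR (2%:E * legendre_logLaplace (symmetrization mu) (2^-1 *: x)%R)) *
  (\int[mu]_(x in [set: Rn R n])
      expeR (- legendre_logLaplace (symmetrization mu) x)) <= 1.
Proof.
move=> IC1.
set L := legendre_logLaplace (symmetrization mu).
set B := \int[mu]_(x in [set: Rn R n]) expeR (- L x).
have B0 : 0 <= B by apply: integral_ge0 => x _; exact: expeR_ge0.
have B1 : B <= 1.
  apply: le_trans (@le_intT _ _ _ mu _ (fun _ => 1) _ _) _.
  - by move=> x; exact: expeR_ge0.
  - move=> x; rewrite -expeR0 lee_expeR oppe_le0; exact: L_ge0.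
  - by rewrite integral_cst// mul1e; exact: probability_le1.
have [b Bb] : exists b : R, B = b%:E.
  apply/EFin_fin_numP; rewrite ge0_fin_numE//; exact: le_lt_trans B1 (ltry 1).
move: B0; rewrite le_eqVlt => /orP[/eqP <-|Bpos]; first by rewrite mule0.
rewrite Bb muleC ge0_integralTE; last by move=> x; exact: expeR_ge0.
rewrite -ereal_sup_pZl; last by rewrite -lte_fin -Bb.
apply: ge_ereal_sup => _ [_ [s hs <-] <-].
pose M := (\sum_(r \in range s) r)%R.
have sM x : (s x <= M)%R.
  rewrite /M (fsbigD1 (s x)); last 2 first.
  - exact: fimfunP.
  - by exists x.
  rewrite lerDl fsumr_ge0// => r [[z _ <-] _]; exact: fun_ge0.
have M0 : (0 <= M)%R by apply: le_trans (sM 0%R); exact: fun_ge0.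
pose k := ln (M + 1).
have k0 : (0 <= k)%R by apply: ln_ge0; rewrite lerDr.
have := @key_ineq R n mu k IC1 k0; rewrite -/L -/B Bb.
apply: le_trans; rewrite [X in _ <= X]muleC lee_pmul2l //; last by rewrite -Bb.
rewrite ge0_integralTE; last by move=> x; exact: expeR_ge0.
apply: ereal_sup_ubound; exists s => //= x.
have [gk|gk] := leP (2%:E * L (2^-1 *: x)%R) k%:E; first exact: hs.
rewrite /= /k lnK ?lee_fin; last by rewrite posrE ltr_pwDr.
by rewrite (le_trans (sM x))// lerDl.
Qed.
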